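(* Let $G$ be a finite simple graph on $n\ge1$ vertices. Then there is exactly one pair of nonnegative integers $(k,m)$ with $2k+m=n$ such that $G(k,m)$ lies in the same Clifford class as $G$, i.e. $\dim_{\mathbb{C}} Z(A_{G(k,m)})=\dim_{\mathbb{C}} Z(A_G)$.
   Context: All graphs are finite, with no loops and no multiple edges. For a graph $G$ with vertices numbered $1,\dots,n$, the Clifford graph algebra $A_G$ is the unital associative $\mathbb{C}$-algebra generated by $e_1,\dots,e_n$ subject to the relations $e_i^2=-1$ for all $i$; $e_ie_j=-e_je_i$ if $i\neq j$ and vertices $i,j$ are adjacent; and $e_ie_j=e_je_i$ if $i\ne j$ and vertices $i,j$ are not adjacent. $Z(A)$ denotes the center. Two graphs with the same number of vertices are in the same Clifford class if the centers of their Clifford graph algebras have the same dimension. For nonnegative integers $k,m$, $G(k,m)$ denotes the graph on $2k+m$ vertices that is the disjoint union of $k$ copies of $K_2$ (a single edge) and $m$ isolated vertices. *)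

(* Defs.v *)
From HB Require Import structures.
From mathcomp Require Import all_boot all_order all_algebra all_field.
Set Implicit Arguments. Unset Strict Implicit. Unset Printing Implicit Defensive.
Import Order.TTheory GRing.Theory Num.Theory.
Local Open Scope ring_scope.

Definition simple_graph (n : nat) (adj : rel 'I_n) : Prop :=
  (forall i j, adj i j = adj j i) /\ (forall i, adj i i = false).

(* Clifford graph algebra A_G over C (here: algC), realised on its monomial
   basis e_S = e_{s_1} ... e_{s_k} (s_1 < ... < s_k), S a set of vertices. *)
Definition cliff (n : nat) := {ffun {set 'I_n} -> algC^o}.

(* e_S e_T = (-1)^(|S∩T| + #{(s,t) in S×T | t < s, s~t}) e_(S Δ T) *)
Definition cliff_sign (n : nat) (adj : rel 'I_n) (S T : {set 'I_n}) : algC :=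
  (-1) ^+ (#|S :&: T| +
           #|[set p : 'I_n * 'I_n | [&& p.1 \in S, p.2 \in T,
                                        (p.2 < p.1)%N & adj p.1 p.2]]|)%N.

Definition symdiff (n : nat) (S T : {set 'I_n}) : {set 'I_n} :=
  (S :\: T) :|: (T :\: S).

Definition cliff_mul (n : nat) (adj : rel 'I_n) (x y : cliff n) : cliff n :=
  [ffun U => \sum_(S : {set 'I_n}) \sum_(T : {set 'I_n})
      (if symdiff S T == U then cliff_sign adj S T * x S * y T else 0)].

Definition cliff_gen (n : nat) (i : 'I_n) : cliff n :=
  [ffun S => if S == [set i] then 1 else 0].
Definition cliff_one (n : nat) : cliff n :=
  [ffun S => if S == set0 then 1 else 0].

Definition cliff_center (n : nat) (adj : rel 'I_n) : {vspace cliff n} :=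
  lker (linfun (fun x : cliff n =>
          linfun (fun y : cliff n => cliff_mul adj x y - cliff_mul adj y x))).

Definition dim_center (n : nat) (adj : rel 'I_n) : nat := \dim (cliff_center adj).

(* G(k,m): vertices 0..2k+m-1; edges {2j, 2j+1} for j < k; the last m vertices
   are isolated. *)
Definition Gkm (k m : nat) : rel 'I_(2 * k + m) :=
  fun i j => [&& (i < 2 * k)%N, (j < 2 * k)%N, i != j & (i./2 == j./2)].
Arguments Gkm : clear implicits.

(* Main.v *)
Require Import Defs.
From HB Require Import structures.
From mathcomp Require Import all_boot all_order all_algebra all_field.
From mathcomp Require Import ring lra zify.
Set Implicit Arguments. Unset Strict Implicit. Unset Printing Implicit Defensive.
Import Order.TTheory GRing.Theory Num.Theory.
Local Open Scope ring_scope.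

Section Sym.
Variable n : nat.
Implicit Types S T U W : {set 'I_n}.

Lemma symdiffC S T : symdiff S T = symdiff T S.
Proof. by rewrite /symdiff setUC. Qed.

Lemma symdiffK S T : symdiff (symdiff S T) T = S.
Proof.
apply/setP=> x; rewrite !inE; by case: (x \in S); case: (x \in T).
Qed.

Lemma symdiffKl S T : symdiff T (symdiff T S) = S.
Proof.
apply/setP=> x; rewrite !inE; by case: (x \in S); case: (x \in T).
Qed.

Lemma symdiff_eq S T W : (symdiff S T == W) = (S == symdiff W T).
Proof.
apply/eqP/eqP => [<-|->]; [by rewrite symdiffK | by rewrite symdiffK].
Qed.

Lemma symdiff_eql S T W : (symdiff T S == W) = (S == symdiff T W).
Proof.
apply/eqP/eqP => [<-|->]; [by rewrite symdiffKl | by rewrite symdiffKl].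
Qed.
End Sym.

Section Alg.
Variable n : nat.
Variable adj : rel 'I_n.
Implicit Types S T U W : {set 'I_n}.
Implicit Types x y z : cliff n.

Definition eS S : cliff n := [ffun U => if U == S then 1 else 0].

Lemma mul_eSr x T W :
  cliff_mul adj x (eS T) W = cliff_sign adj (symdiff W T) T * x (symdiff W T).
Proof.
rewrite ffunE (eq_bigr (fun S => if symdiff S T == W then cliff_sign adj S T * x S else 0)).
  rewrite (bigD1 (symdiff W T)) //= symdiffK eqxx big1 ?addr0 // => S nS.
  by rewrite symdiff_eq (negbTE nS).
move=> S _; rewrite (bigD1 T) //= ffunE eqxx mulr1 big1 ?addr0 // => T' nT.
by rewrite ffunE (negbTE nT) mulr0; case: ifP.
Qed.

Lemma mul_eSl T x W :
  cliff_mul adj (eS T) x W = cliff_sign adj T (symdiff T W) * x (symdiff T W).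
Proof.
rewrite ffunE (bigD1 T) //=.
have -> : \sum_(S | S != T) \sum_T' (if symdiff S T' == W
    then cliff_sign adj S T' * eS T S * x T' else 0) = 0.
  apply: big1 => S nS; apply: big1 => T' _; rewrite ffunE (negbTE nS) mulr0 mul0r.
  by case: ifP.
rewrite addr0 (bigD1 (symdiff T W)) //= symdiffKl eqxx ffunE eqxx mulr1 big1 ?addr0 //.
by move=> S nS; rewrite symdiff_eql (negbTE nS).
Qed.

Lemma cliff_mul_linl z : linear (fun x => cliff_mul adj x z).
Proof.
move=> a x y; apply/ffunP=> U; rewrite !ffunE scaler_sumr -big_split /=.
apply: eq_bigr => S _; rewrite scaler_sumr -big_split /=; apply: eq_bigr => T _.
rewrite !ffunE; case: ifP => _; rewrite /GRing.scale /=; ring.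
Qed.

Lemma cliff_mul_linr x : linear (cliff_mul adj x).
Proof.
move=> a y z; apply/ffunP=> U; rewrite !ffunE scaler_sumr -big_split /=.
apply: eq_bigr => S _; rewrite scaler_sumr -big_split /=; apply: eq_bigr => T _.
rewrite !ffunE; case: ifP => _; rewrite /GRing.scale /=; ring.
Qed.
End Alg.

Section C.
Variable n : nat.
Variable adj : rel 'I_n.
Implicit Types S T U W : {set 'I_n}.
Implicit Types x y z : cliff n.

Definition commf x := fun y : cliff n => cliff_mul adj x y - cliff_mul adj y x.

Lemma commf_lin x : linear (commf x).
Proof.
move=> a y z; rewrite /commf (cliff_mul_linr adj x a y z).
rewrite (cliff_mul_linl adj x a y z) scalerBr; rewrite /=.
by rewrite addrACA opprD.
Qed.

HB.instance Definition _ x := GRing.isLinear.Build _ _ _ _ (commf x) (commf_lin x).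

Definition commF x : 'Hom(cliff n, cliff n) := linfun (commf x).

Lemma commF_lin : linear commF.
Proof.
move=> a x y; apply/lfunP => z; rewrite add_lfunE scale_lfunE !lfunE /commf /=.
have E1 := cliff_mul_linl adj z a x y; have E2 := cliff_mul_linr adj z a x y; simpl in E1, E2.
idtac.
rewrite /commf.
rewrite E1 E2 scalerBr.
by rewrite addrACA opprD.
Qed.

HB.instance Definition _ := GRing.isLinear.Build _ _ _ _ commF commF_lin.

Lemma memC x : x \in cliff_center adj <-> forall y, cliff_mul adj x y = cliff_mul adj y x.
Proof.
rewrite /cliff_center memv_ker.
have -> : (linfun (fun x0 : cliff n => linfun (fun y : cliff n =>
    cliff_mul adj x0 y - cliff_mul adj y x0))) x = commF x.
  exact: (lfunE commF).
split=> [/eqP/lfunP H y | H].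
  by have := H y; rewrite lfunE zero_lfunE /commf => /eqP; rewrite subr_eq0 => /eqP.
by apply/eqP/lfunP => y; rewrite lfunE /= lfunE /commf H subrr.
Qed.
End C.

Section D.
Variable n : nat.
Variable adj : rel 'I_n.
Implicit Types S T U W : {set 'I_n}.
Implicit Types x y z : cliff n.

Definition Zc := [set A | [forall T, cliff_sign adj A T == cliff_sign adj T A]].

Definition Xs := [seq eS A | A <- enum Zc].

Lemma center_span : cliff_center adj = <<Xs>>%VS.
Proof.
apply/eqP; rewrite eqEsubv; apply/andP; split.
  apply/subvP => x /memC Hx.
  have hz U : U \notin Zc -> x U = 0.
    rewrite inE negb_forall => /existsP [T hT].
    have := congr1 (fun f : cliff n => f (symdiff U T)) (Hx (eS T)).
    rewrite /= mul_eSr mul_eSl symdiffK (symdiffC U T) symdiffKl => /eqP.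
    rewrite -subr_eq0 -mulrBl mulf_eq0 subr_eq0 (negbTE hT) /= => /eqP //.
  have -> : x = \sum_(U in Zc) x U *: eS U.
    apply/ffunP => W; rewrite sum_ffunE.
    case: (boolP (W \in Zc)) => hW.
      rewrite (bigD1 W) //= !ffunE eqxx -[(x W)%:A]/(x W * 1).
rewrite mulr1 big1 ?addr0 // => U /andP [_ nU].
      by rewrite !ffunE eq_sym (negbTE nU) ?mulr0 ?scaler0.
    rewrite hz // big1 // => U hU; rewrite !ffunE; case: eqP => [e|_]; last by rewrite scaler0.
    by rewrite -e in hU; rewrite (negbTE hW) in hU.
  apply: memv_suml => U hU; apply: memvZ.
  by apply: memv_span; apply: map_f; rewrite mem_enum.
apply/span_subvP => v /mapP [A hS ->]; apply/memC => y; apply/ffunP=> W.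
rewrite mul_eSl mul_eSr (symdiffC W A).
move: hS; rewrite mem_enum inE => /forallP /(_ (symdiff A W)) /eqP ->.
by [].
Qed.

Lemma free_Xs : free Xs.
Proof.
apply/freeP => k hk i.
set N := size Xs.
have hi : (i < size (enum Zc))%N by rewrite -cardE ltn_ord.
have := congr1 (fun f : cliff n => f (nth set0 (enum Zc) i)) hk.
rewrite /= sum_ffunE ffunE (bigD1 i) //= big1.
  rewrite !ffunE (nth_map set0) // ffunE eqxx addr0 -[_ *: 1]/(k i * 1) mulr1; exact.

move=> j nj; rewrite !ffunE (nth_map set0) // ?ffunE; last first.
  by rewrite -cardE ltn_ord.
rewrite nth_uniq ?enum_uniq //; last by rewrite -cardE ltn_ord.
case: eqP => [e|_]; last by rewrite scaler0.
by move: nj; rewrite (val_inj e) eqxx.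
Qed.

Lemma dim_center_Zc : dim_center adj = #|Zc|.
Proof.
rewrite /dim_center center_span.
have := free_Xs; rewrite /free => /eqP ->.
by rewrite size_map cardE.
Qed.
End D.

Definition par (T : finType) (adj : rel T) (A : {set T}) (t : T) : bool :=
  \big[addb/false]_(s in A) adj s t.

Definition Kset (T : finType) (adj : rel T) (V : {set T}) : {set {set T}} :=
  [set A : {set T} | (A \subset V) && [forall t in V, ~~ par adj A t]].

Lemma oddS (I : finType) (P : pred I) (F : I -> nat) :
  odd (\sum_(i | P i) F i) = \big[addb/false]_(i | P i) odd (F i).
Proof. exact: (big_morph _ oddD (erefl _)). Qed.

Section Z.
Variable n : nat.
Variable adj : rel 'I_n.
Hypothesis adjC : forall i j, adj i j = adj j i.
Hypothesis adj0 : forall i, adj i i = false.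

Definition cnt (A B : {set 'I_n}) :=
  #|[set p : 'I_n * 'I_n | [&& p.1 \in A, p.2 \in B, (p.2 < p.1)%N & adj p.1 p.2]]|.

Lemma cs (P : pred ('I_n * 'I_n)) : #|[set p | P p]| = (\sum_p P p)%N.
Proof.
rewrite -sum1_card big_mkcond /=; apply: eq_bigr => p _; rewrite inE.
by case: (P p).
Qed.

Lemma cnt_sum A B : (cnt A B + cnt B A =
  \sum_s \sum_t ((s \in A) && (t \in B) && adj s t))%N.
Proof.
rewrite /cnt !cs.
rewrite -(pair_bigA _ (fun s t : 'I_n => nat_of_bool [&& s \in A, t \in B, (t < s)%N & adj s t])).
rewrite -(pair_bigA _ (fun s t : 'I_n => nat_of_bool [&& s \in B, t \in A, (t < s)%N & adj s t])).
rewrite [X in (_ + X)%N]exchange_big -big_split; apply: eq_bigr => s _.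
rewrite -big_split; apply: eq_bigr => t _ /=.
rewrite (adjC t s).
case: (ltngtP (val s) (val t)) => h.
- by case: (s \in A); case: (t \in B); case: (adj s t).
- by case: (s \in A); case: (t \in B); case: (adj s t).
- by rewrite (val_inj h) adj0 /= !andbF.
Qed.

Lemma sign_eq A B : (cliff_sign adj A B == cliff_sign adj B A) =
  ~~ \big[addb/false]_(t in B) par adj A t.
Proof.
rewrite /cliff_sign -/(cnt A B) -/(cnt B A).
rewrite -signr_odd -[(-1) ^+ (_ + cnt B A)]signr_odd (inj_eq signr_inj) !oddD setIC.
have -> : \big[addb/false]_(t in B) par adj A t = odd (cnt A B + cnt B A).
  rewrite cnt_sum [RHS]oddS.
  under [RHS]eq_bigr => s _ do rewrite oddS.
  rewrite [RHS]exchange_big /= [LHS]big_mkcond /=; apply: eq_bigr => t _.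
  rewrite /par; case: (t \in B).
    by rewrite big_mkcond; apply: eq_bigr => s _; case: (s \in A); case: (adj s t).
  by rewrite big1 // => s _; rewrite andbF.
rewrite oddD.
by case: (odd #|B :&: A|); case: (odd (cnt A B)); case: (odd (cnt B A)).
Qed.

Lemma Zc_K : Zc adj = Kset adj setT.
Proof.
apply/setP => A; rewrite !inE subsetT /=.
apply/forallP/forall_inP => [H t _ | H B].
  by move: (H [set t]); rewrite sign_eq big_set1.
by rewrite sign_eq big1 // => t _; apply/negbTE/H.
Qed.
End Z.
Local Close Scope ring_scope.

Section Ind.
Variable T : finType.

Lemma parD1 (adj : rel T) A x t : par adj A t = ((x \in A) && adj x t) (+) par adj (A :\ x) t.
Proof.
case: (boolP (x \in A)) => h; first by rewrite /par (big_setD1 x h).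
have -> : A :\ x = A by apply/setP => y; rewrite !inE; case: eqP => // ->; rewrite (negbTE h).
by [].
Qed.

Lemma par_split (adj : rel T) A t u v : u != v ->
  par adj A t = par adj (A :\ u :\ v) t (+) ((u \in A) && adj u t) (+) ((v \in A) && adj v t).
Proof.
move=> uv; rewrite (parD1 adj A u) (parD1 adj (A :\ u) v) !inE eq_sym uv /=.
by case: (u \in A); case: (v \in A); case: (adj u t); case: (adj v t);
  case: (par _ _ _).
Qed.

Definition adjr (adj : rel T) (u v : T) : rel T :=
  fun x y => adj x y (+) (adj x u && adj v y) (+) (adj x v && adj u y).

Lemma par_adjr (adj : rel T) u v A t :
  par (adjr adj u v) A t = par adj A t (+) (par adj A u && adj v t) (+) (par adj A v && adj u t).
Proof.
rewrite /par /adjr !big_split /= !big_distrl /=.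
by [].
Qed.

Lemma noedge (adj : rel T) (V : {set T}) : (forall u v, u \in V -> v \in V -> adj u v = false) ->
  Kset adj V = powerset V.
Proof.
move=> h; apply/setP => A; rewrite !inE; case sA: (A \subset V) => //=.
apply/forall_inP => t tV; rewrite /par big1 // => s sA'.
by apply: h => //; apply: (subsetP sA).
Qed.
End Ind.

Section Bij.
Variable T : finType.
Variable adj : rel T.
Hypothesis sym : forall x y, adj x y = adj y x.
Hypothesis irr : forall x, adj x x = false.
Variables (V : {set T}) (u v : T).
Hypotheses (hu : u \in V) (hv : v \in V) (huv : adj u v).

Let uv : u != v.
Proof. by apply/eqP => e; move: huv; rewrite e irr. Qed.

Let V' := V :\ u :\ v.
Let f (A : {set T}) := A :\ u :\ v.
Let g (B : {set T}) := B :|: [set x | ((x == u) && par adj B v) || ((x == v) && par adj B u)].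

Lemma fK A : A \in Kset adj V -> f A \in Kset (adjr adj u v) V' /\ g (f A) = A.
Proof.
rewrite inE => /andP [sA /forall_inP hp].
have hs t := par_split adj A t uv.
have eb : par adj (f A) u = (v \in A).
  have := hp u hu; rewrite hs irr (sym v u) huv andbF andbT.
  by case: (par _ _ _); case: (v \in A).
have ea : par adj (f A) v = (u \in A).
  have := hp v hv; rewrite hs irr huv andbF andbT.
  by case: (par _ _ _); case: (u \in A).
split.
  rewrite inE; apply/andP; split; first by rewrite /f /V' !setSD.
  apply/forall_inP => t ht.
  have tV : t \in V by move: ht; rewrite !inE => /andP [_ /andP [_ ->]].
  rewrite par_adjr eb ea.
  have := hp t tV; rewrite hs.
  by case: (par _ _ _); case: (u \in A); case: (v \in A); case: (adj u t); case: (adj v t).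
apply/setP => x; rewrite /g !inE eb ea.
case: (eqVneq x u) => [->|xu]; first by rewrite (negbTE uv) /=; case: (u \in A).
case: (eqVneq x v) => [->|xv] /=; first by case: (v \in A).
by case: (x \in A).
Qed.

Lemma gK B : B \in Kset (adjr adj u v) V' -> g B \in Kset adj V /\ f (g B) = B.
Proof.
rewrite inE => /andP [sB /forall_inP hp].
have nu : u \notin B.
  by apply/negP => /(subsetP sB); rewrite /V' !inE eqxx andbF.
have nv : v \notin B.
  by apply/negP => /(subsetP sB); rewrite /V' !inE eqxx.
have fg : f (g B) = B.
  apply/setP => x; rewrite /f /g !inE.
  case: (eqVneq x v) => [->|xv] /=; first by rewrite (negbTE nv).
  case: (eqVneq x u) => [->|xu] /=; first by rewrite (negbTE nu).
  by case: (x \in B).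
have mu : (u \in g B) = par adj B v by rewrite /g !inE (negbTE nu) eqxx (negbTE uv) /=; case: (par _ _ _).
have mv : (v \in g B) = par adj B u by rewrite /g !inE (negbTE nv) eqxx [v == u]eq_sym (negbTE uv) /=; case: (par _ _ _).
split => //.
rewrite inE; apply/andP; split.
  apply/subsetP => x; rewrite /g !inE => /orP [/(subsetP sB)|/orP [/andP [/eqP -> _]|/andP [/eqP -> _]]] //.
  by rewrite /V' !inE => /andP [_ /andP [_ ->]].
apply/forall_inP => t ht.
rewrite (par_split adj (g B) t uv) -/(f (g B)) fg mu mv.
case: (eqVneq t u) => [->|tu].
  by rewrite irr (sym v u) huv andbF andbT; case: (par _ _ _).
case: (eqVneq t v) => [->|tv].
  by rewrite irr huv andbF andbT; case: (par _ _ _).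
have ht' : t \in V' by rewrite /V' !inE tu tv ht.
have := hp t ht'; rewrite par_adjr.
by case: (par adj B t); case: (par adj B u); case: (par adj B v); case: (adj u t); case: (adj v t).
Qed.

Lemma K_bij : #|Kset adj V| = #|Kset (adjr adj u v) V'|.
Proof.
have inj : {in Kset adj V &, injective f}.
  move=> A1 A2 h1 h2 e.
  by rewrite -(fK h1).2 -(fK h2).2 e.
rewrite -(card_in_imset inj); apply: eq_card => B.
apply/imsetP/idP => [[A hA ->]|hB].
  exact: (fK hA).1.
by exists (g B); [exact: (gK hB).1 | rewrite (gK hB).2].
Qed.
End Bij.

Lemma adjr_sym (T : finType) (adj : rel T) u v :
  (forall x y, adj x y = adj y x) -> forall x y, adjr adj u v x y = adjr adj u v y x.
Proof.
move=> sym x y; rewrite /adjr (sym y x) (sym y u) (sym v x) (sym y v) (sym u x).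
by case: (adj x y); case: (adj u y); case: (adj x v); case: (adj v y); case: (adj x u).
Qed.

Lemma adjr_irr (T : finType) (adj : rel T) u v :
  (forall x y, adj x y = adj y x) -> (forall x, adj x x = false) ->
  forall x, adjr adj u v x x = false.
Proof.
move=> sym irr x; rewrite /adjr irr (sym v x) (sym u x).
by case: (adj x u); case: (adj x v).
Qed.

Lemma K_card (T : finType) N : forall (V : {set T}) (adj : rel T), (#|V| <= N)%N ->
  (forall x y, adj x y = adj y x) -> (forall x, adj x x = false) ->
  exists d, [/\ #|Kset adj V| = 2 ^ d, (d <= #|V|)%N & ~~ odd (#|V| - d)].
Proof.
elim: N => [|N IH] V adj hV sym irr.
  have V0 : V = set0 by apply/eqP; rewrite -cards_eq0; move: hV; case: #|V|.
  exists #|V|; split => //; last by rewrite subnn.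
  rewrite noedge ?card_powerset // V0 => u v; rewrite inE.
  by [].
case: (boolP [exists u in V, exists v in V, adj u v]) => [|hne]; last first.
  exists #|V|; split => //; last by rewrite subnn.
  rewrite noedge ?card_powerset // => u v hu hv; apply/negbTE; apply: contra hne => h.
  by apply/exists_inP; exists u => //; apply/exists_inP; exists v.
move=> /exists_inP [u hu /exists_inP [v hv huv]].
have uv : u != v by apply/eqP => e; move: huv; rewrite e irr.
have c1 := cardsD1 u V; have c2 := cardsD1 v (V :\ u).
rewrite hu in c1; rewrite !inE eq_sym uv hv /= in c2.
have hV' : (#|V :\ u :\ v| <= N)%N by lia.
have [d [hd hdle hpar]] := IH _ _ hV' (adjr_sym u v sym) (adjr_irr u v sym irr).
exists d; split.
- by rewrite (K_bij sym irr hu hv huv).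
- lia.
- have -> : (#|V| - d = (#|V :\ u :\ v| - d).+2)%N by lia.
  by rewrite /= negbK.
Qed.

Section G.
Variables k m : nat.
Let N := (2 * k + m)%N.

Lemma Gkm_sym (i j : 'I_(2 * k + m)) : Gkm k m i j = Gkm k m j i.
Proof.
rewrite /Gkm eq_sym [(j./2 == _)]eq_sym.
by case: (i < 2 * k)%N; case: (j < 2 * k)%N.
Qed.

Lemma Gkm_irr (i : 'I_(2 * k + m)) : Gkm k m i i = false.
Proof. by rewrite /Gkm eqxx !andbF. Qed.

Definition Hs := [set i : 'I_(2 * k + m) | (2 * k <= i)%N].

Lemma KG : Kset (Gkm k m) setT = powerset Hs.
Proof.
apply/setP => A; rewrite !inE subsetT /=; apply/idP/idP.
  move/forall_inP => hp; apply/subsetP => s sA; rewrite inE leqNgt; apply/negP => hs.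
  pose p := if odd s then s.-1 else s.+1.
  have hp2 : (p < 2 * k)%N by rewrite /p; case: ifP => ho; lia.
  have hpN : (p < 2 * k + m)%N by lia.
  pose t : 'I_(2 * k + m) := Ordinal hpN.
  have := hp t (in_setT t); rewrite /par (big_setD1 s sA) big1 /=.
    have -> : Gkm k m s t.
      rewrite /Gkm /= hs hp2 /=; apply/andP; split.
        by rewrite -val_eqE /= /p; case: ifP => ho; apply/eqP; lia.
      by apply/eqP; rewrite /p; case: ifP => ho; lia.
    by [].
  move=> s'; rewrite !inE => /andP [ns' _]; apply/negbTE/negP.
  rewrite /Gkm => /and4P [h1 h2 h3 /eqP h4].
  rewrite -val_eqE in ns'; rewrite -val_eqE /= in h3; rewrite /= in h4.
  move: ns' h3 h4; rewrite /p; case: ifP => ho; move=> /eqP ns' /eqP h3 h4; change (nat_of_ord s' <> nat_of_ord s) in ns'; lia.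
move=> sub; apply/forall_inP => t _; rewrite /par big1 // => s sA.
by move: (subsetP sub s sA); rewrite inE /Gkm leqNgt => /negbTE ->.
Qed.

Lemma cardHs : #|Hs| = m.
Proof.
have -> : Hs = (@rshift (2 * k) m) @: [set: 'I_m].
  apply/setP => i; rewrite inE; apply/idP/imsetP.
    move=> h; have hi : (i - 2 * k < m)%N by have := ltn_ord i; lia.
    exists (Ordinal hi); first by rewrite inE.
    by apply: val_inj => /=; lia.
  by move=> [j _ ->] /=; rewrite leq_addr.
by rewrite card_imset ?cardsT ?card_ord //; exact: rshift_inj.
Qed.

Lemma dimG : dim_center (Gkm k m) = (2 ^ m)%N.
Proof.
rewrite dim_center_Zc Zc_K; last exact: Gkm_irr; last exact: Gkm_sym.
by rewrite KG card_powerset cardHs.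
Qed.
End G.

Theorem mainTheorem3 (n : nat) (adj : rel 'I_n) :
  (1 <= n)%N -> simple_graph adj ->
  exists! km : nat * nat,
    (2 * km.1 + km.2 = n)%N /\
    dim_center (Gkm km.1 km.2) = dim_center adj.
Proof.
move=> hn [sym irr].
have [d [hd hdle hpar]] := @K_card _ _ [set: 'I_n] adj (leqnn _) sym irr.
rewrite cardsT card_ord in hdle hpar.
have hdim : dim_center adj = (2 ^ d)%N by rewrite dim_center_Zc Zc_K.
exists ((n - d)./2, d); split.
  split; last by rewrite dimG hdim.
  by rewrite /=; move: hpar; case: (odd (n - d)) (odd_double_half (n - d)) => //= e _; lia.
move=> [k' m'] /= [e h]; rewrite dimG hdim in h.
have md : m' = d by apply: (expnI (m := 2)).
subst m'; congr pair.
have -> : (n - d = 2 * k')%N by lia.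
by rewrite mul2n doubleK.
Qed.
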